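(* Let $K\ge1$, $\bar P_1,\dots,\bar P_K>0$ and $0<h_1<h_2<\dots<h_K$. Consider maximizing over $\mathbf P\in\mathcal P=\{\mathbf P:0\le P_k\le\bar P_k\ \forall k\}$ the quantity $$f(\mathbf P)=\tfrac12\log\Big(1+\sum_{k=1}^KP_k\Big)-\tfrac12\log\Big(1+\sum_{k=1}^Kh_kP_k\Big).$$ Set $h_0=0$, $\bar P_0=0$, $h_{K+1}=+\infty$, and for $0\le T\le K$ let $\phi_T=\frac{1+\sum_{k=0}^Th_k\bar P_k}{1+\sum_{k=0}^T\bar P_k}$. Then there is a (unique) index $T\in\{0,\dots,K\}$ with $h_T<\phi_T\le h_{T+1}$, and the allocation $P^*_k=\bar P_k$ for $k\le T$, $P^*_k=0$ for $k>T$ maximizes $f$ over $\mathcal P$ (hence also maximizes the secrecy sum-rate $[f(\mathbf P)]^+$ of the superposition region).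
   Context: $\log$ is base 2; $[x]^+=\max\{x,0\}$. The quantity $[f(\mathbf P)]^+$ is the secrecy sum-rate bound $\sum_k R^s_k\le[C^M_{\mathcal K}(\mathbf P)-C^W_{\mathcal K}(\mathbf P)]^+$ of the superposition region of the standardized Gaussian multiple-access wire-tap channel, where user $k$ has (standardized) eavesdropper gain $h_k$ and the intended receiver's gains are all 1. *)

(* Defs.v *)
From mathcomp Require Import all_boot all_order all_algebra.
From mathcomp Require Import all_classical all_reals all_analysis.
Set Implicit Arguments. Unset Strict Implicit. Unset Printing Implicit Defensive.
Import Order.TTheory GRing.Theory Num.Theory.
Local Open Scope ring_scope.

Definition log2 {R : realType} (x : R) : R := ln x / ln 2.

(* Users are indexed 1..K; P, Pbar, h : nat -> R, only indices 1..K matter. *)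
Definition fobj {R : realType} (K : nat) (h P : nat -> R) : R :=
  2^-1 * log2 (1 + \sum_(1 <= k < K.+1) P k)
  - 2^-1 * log2 (1 + \sum_(1 <= k < K.+1) h k * P k).

Definition feasible {R : realType} (K : nat) (Pbar P : nat -> R) : Prop :=
  forall k, (1 <= k <= K)%N -> 0 <= P k <= Pbar k.

(* phi_T, with the convention h_0 = 0, Pbar_0 = 0 (the k = 0 term vanishes) *)
Definition phi {R : realType} (h Pbar : nat -> R) (T : nat) : R :=
  (1 + \sum_(1 <= k < T.+1) h k * Pbar k) / (1 + \sum_(1 <= k < T.+1) Pbar k).

Definition hext {R : realType} (h : nat -> R) (k : nat) : R :=
  if k == 0%N then 0 else h k.

(* h_T < phi_T <= h_{T+1}, with h_{K+1} = +oo *)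
Definition threshold_index {R : realType} (K : nat) (h Pbar : nat -> R) (T : nat)
  : Prop :=
  (T <= K)%N /\ hext h T < phi h Pbar T /\ ((T < K)%N -> phi h Pbar T <= h T.+1).

Definition Pstar {R : realType} (Pbar : nat -> R) (T : nat) (k : nat) : R :=
  if (k <= T)%N then Pbar k else 0.

(* Main.v *)
Require Import Defs.
From mathcomp Require Import all_boot all_order all_algebra.
From mathcomp Require Import all_classical all_reals all_analysis.
From mathcomp Require Import ring lra.
Import Order.TTheory GRing.Theory Num.Theory.
Local Open Scope ring_scope.

Lemma hmono (R : realType) (K : nat) (h : nat -> R) :
  (forall k, (1 <= k < K)%N -> h k < h k.+1) ->
  forall i j, (1 <= i)%N -> (i <= j)%N -> (j <= K)%N -> h i <= h j.
Proof.
move=> Hh i; elim=> [|j IH] Hi Hij HjK; first by move: Hi Hij; case: i.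
case: (ltngtP i j.+1) Hij => // [Hlt _|-> _]; last by [].
apply: (le_trans (IH Hi _ _)); first by rewrite -ltnS.
  by apply: ltnW.
apply: ltW; apply: Hh; rewrite HjK andbT; apply: (leq_trans Hi); by rewrite -ltnS.
Qed.

Lemma step_gt (R : realType) (A B p c : R) : 0 < B -> 0 < p ->
  c < A / B -> c < (A + c * p) / (B + p).
Proof.
move=> HB Hp; rewrite !ltr_pdivlMr //; last by lra.
move=> H; nra.
Qed.

Lemma step_le (R : realType) (A B p c : R) : 0 < B -> 0 < p ->
  A / B <= c -> (A + c * p) / (B + p) <= c.
Proof.
move=> HB Hp; rewrite !ler_pdivrMr //; last by lra.
move=> H; nra.
Qed.

Lemma Sp_ge0 (R : realType) (K : nat) (Pbar : nat -> R) n :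
  (forall k, (1 <= k <= K)%N -> 0 <= Pbar k) -> (n <= K)%N ->
  0 <= \sum_(1 <= k < n.+1) Pbar k.
Proof.
move=> HP Hn; rewrite big_nat_cond; apply: sumr_ge0 => i /andP[/andP[H1 H2] _].
apply: HP; rewrite H1 /=; apply: leq_trans Hn; by rewrite -ltnS.
Qed.

Lemma phiS (R : realType) (h Pbar : nat -> R) n :
  phi h Pbar n.+1 =
  ((1 + \sum_(1 <= k < n.+1) h k * Pbar k) + h n.+1 * Pbar n.+1) /
  ((1 + \sum_(1 <= k < n.+1) Pbar k) + Pbar n.+1).
Proof. by rewrite /phi (big_nat_recr n.+1) // (big_nat_recr n.+1) // !addrA. Qed.

Lemma phi0 (R : realType) (h Pbar : nat -> R) : phi h Pbar 0 = 1.
Proof. by rewrite /phi !big_geq // addr0 divr1. Qed.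

Lemma sumPstar (R : realType) (K T : nat) (Pbar c : nat -> R) : (T <= K)%N ->
  \sum_(1 <= k < K.+1) c k * Pstar Pbar T k = \sum_(1 <= k < T.+1) c k * Pbar k.
Proof.
move=> HT; rewrite (big_cat_nat _ (n:=T.+1)) //.
have -> : \sum_(T.+1 <= k < K.+1) c k * Pstar Pbar T k = 0.
  rewrite big_nat_cond big1 //.
  by move=> i /andP[/andP[Hi _] _]; rewrite /Pstar leqNgt Hi mulr0.
rewrite /= ?addr0.
apply: eq_big_nat => i /andP[_ Hi]; rewrite ltnS in Hi; by rewrite /Pstar Hi.
Qed.

Theorem theorem3 (R : realType) (K : nat) (Pbar h : nat -> R) :
  (1 <= K)%N ->
  (forall k, (1 <= k <= K)%N -> 0 < Pbar k) ->
  0 < h 1%N ->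
  (forall k, (1 <= k < K)%N -> h k < h k.+1) ->
  exists T : nat,
    [/\ threshold_index K h Pbar T,
        (forall T' : nat, threshold_index K h Pbar T' -> T' = T),
        feasible K Pbar (Pstar Pbar T),
        (forall P : nat -> R, feasible K Pbar P -> fobj K h P <= fobj K h (Pstar Pbar T)) &
        (forall P : nat -> R, feasible K Pbar P ->
           Num.max (fobj K h P) 0 <= Num.max (fobj K h (Pstar Pbar T)) 0)].
Proof.
move=> HK HPb Hh1 Hh.
have HPb0 : forall k, (1 <= k <= K)%N -> 0 <= Pbar k by move=> k /HPb /ltW.
have Hm := @hmono R K h Hh.
have Npos : forall n, (n <= K)%N -> 0 < 1 + \sum_(1 <= k < n.+1) Pbar k.
  move=> n Hn; have := @Sp_ge0 R K Pbar n HPb0 Hn; lra.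
have Hex : forall n, (n <= K)%N ->
  (exists T, threshold_index K h Pbar T) \/ hext h n < phi h Pbar n.
  elim=> [|n IH] Hn.
    by right; rewrite phi0 /hext /=; lra.
  case: (IH (ltnW Hn)) => [Hex|Hlt]; first by left.
  case: (leP (phi h Pbar n) (h n.+1)) => Hc.
    by left; exists n; split; [apply: ltnW|split].
  right; rewrite /hext /= phiS; apply: step_gt => //.
    by apply: Npos; apply: ltnW.
  by apply: HPb; rewrite Hn.
have [T HT] : exists T, threshold_index K h Pbar T.
  case: (Hex K (leqnn K)) => [//|H]; exists K; split => //; split => //.
  by rewrite ltnn.
have Hup : forall T, threshold_index K h Pbar T ->
    forall m, (T < m <= K)%N -> phi h Pbar m <= h m.
  move=> T0 [HT0K [_ HT0]]; elim=> [|m IH] /andP[Hlt HmK]; first by [].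
  rewrite phiS; apply: step_le; first by apply: Npos; apply: ltnW.
    by apply: HPb; rewrite HmK.
  rewrite ltnS in Hlt; case: (ltngtP T0 m) Hlt => // [Hlt _|Heq _].
    apply: (@le_trans _ _ (h m) (phi h Pbar m)); first by apply: IH; rewrite Hlt ltnW.
    by apply: Hm => //; exact: (leq_ltn_trans (leq0n _) Hlt).
  by subst; exact: (HT0 HmK).
have Huniq : forall T', threshold_index K h Pbar T' -> T' = T.
  have aux : forall A B, threshold_index K h Pbar A -> threshold_index K h Pbar B ->
      ~ (A < B)%N.
    move=> A B HA HB Hc.
    have H1 := Hup _ HA B; case: HB => [HBK [HB1 _]].
    have := H1; rewrite Hc HBK => /(_ isT) H2.
    have Hne : (B != 0)%N by rewrite -lt0n; exact: (leq_ltn_trans (leq0n _) Hc).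
    move: HB1; rewrite /hext (negbTE Hne) => HB1.
    move: H2 HB1; set u := phi h Pbar B; set v := h B => H2 H3.
    by have := lt_le_trans H3 H2; rewrite ltxx.
  move=> T' HT'; case: (ltngtP T' T) => // Hc.
    by case: (aux _ _ HT' HT Hc).
  by case: (aux _ _ HT HT' Hc).
exists T.
case: (HT) => [HTK [HT1 HT2]].
have Hfeas : feasible K Pbar (Pstar Pbar T).
  move=> k Hk; rewrite /Pstar; by case: ifP => _; rewrite lexx HPb0.
set psi := phi h Pbar T.
have Hkey : forall P, feasible K Pbar P ->
    psi * (1 + \sum_(1 <= k < K.+1) P k) <= 1 + \sum_(1 <= k < K.+1) h k * P k.
  move=> P HP.
  set Q := Pstar Pbar T.
  have E : \sum_(1 <= k < K.+1) (h k - psi) * (P k - Q k) =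
      (\sum_(1 <= k < K.+1) h k * P k - \sum_(1 <= k < K.+1) h k * Q k)
      - psi * (\sum_(1 <= k < K.+1) P k - \sum_(1 <= k < K.+1) Q k).
    rewrite -!sumrB mulr_sumr -sumrB; apply: eq_bigr => i _; ring.
  have EQ1 : \sum_(1 <= k < K.+1) h k * Q k = \sum_(1 <= k < T.+1) h k * Pbar k.
    by rewrite sumPstar.
  have EQ2 : \sum_(1 <= k < K.+1) Q k = \sum_(1 <= k < T.+1) Pbar k.
    transitivity (\sum_(1 <= k < K.+1) (fun=> 1 : R) k * Pstar Pbar T k).
      by apply: eq_bigr => i _; rewrite mul1r.
    rewrite sumPstar //; by apply: eq_bigr => i _; rewrite mul1r.
  have Hpsi : psi * (1 + \sum_(1 <= k < T.+1) Pbar k) =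
      1 + \sum_(1 <= k < T.+1) h k * Pbar k.
    rewrite /psi /phi divfK //; apply: lt0r_neq0; exact: Npos.
  have Hs : 0 <= \sum_(1 <= k < K.+1) (h k - psi) * (P k - Q k).
    rewrite big_nat_cond; apply: sumr_ge0 => i /andP[/andP[H1 H2] _].
    rewrite ltnS in H2.
    have HPi := HP i (andb_true_intro (conj H1 H2)).
    case/andP: HPi => HPi1 HPi2.
    rewrite /Q /Pstar; case: (leqP i T) => HiT.
      apply: mulr_le0; last by rewrite subr_le0.
      rewrite subr_le0; apply: ltW; apply: le_lt_trans HT1.
      rewrite /hext; case: eqP => [HT0|_].
        by move: HiT H1; rewrite HT0; case: (i).
      by apply: Hm.
    apply: mulr_ge0; last by rewrite subr0.
    rewrite subr_ge0; apply: (le_trans (HT2 (leq_trans HiT H2))).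
    by apply: Hm.
  rewrite E EQ1 EQ2 in Hs.
  move: Hs Hpsi; set a := \sum_(1 <= k < K.+1) P k.
  set b := \sum_(1 <= k < K.+1) h k * P k.
  set c := \sum_(1 <= k < T.+1) h k * Pbar k.
  set d := \sum_(1 <= k < T.+1) Pbar k.
  move=> Hs Hpsi; nra.
have Hopt : forall P, feasible K Pbar P -> fobj K h P <= fobj K h (Pstar Pbar T).
  move=> P HP.
  have Nge : forall Q, feasible K Pbar Q -> 1 <= 1 + \sum_(1 <= k < K.+1) Q k.
    move=> Q HQ; rewrite lerDl big_nat_cond; apply: sumr_ge0.
    move=> i /andP[/andP[H1 H2] _]; rewrite ltnS in H2.
    by case/andP: (HQ i (andb_true_intro (conj H1 H2))).
  have Dge : forall Q, feasible K Pbar Q ->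
      1 <= 1 + \sum_(1 <= k < K.+1) h k * Q k.
    move=> Q HQ; rewrite lerDl big_nat_cond; apply: sumr_ge0.
    move=> i /andP[/andP[H1 H2] _]; rewrite ltnS in H2.
    case/andP: (HQ i (andb_true_intro (conj H1 H2))) => Hq _.
    apply: mulr_ge0 => //; apply: ltW; apply: (lt_le_trans Hh1).
    by apply: Hm.
  have HN := Nge _ HP; have HD := Dge _ HP.
  have HN' := Nge _ Hfeas; have HD' := Dge _ Hfeas.
  have K1 := Hkey _ HP.
  have K2 : psi * (1 + \sum_(1 <= k < K.+1) Pstar Pbar T k) =
      1 + \sum_(1 <= k < K.+1) h k * Pstar Pbar T k.
    have EQ1 := @sumPstar R K T Pbar h HTK.
    have EQ2 : \sum_(1 <= k < K.+1) Pstar Pbar T k = \sum_(1 <= k < T.+1) Pbar k.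
      transitivity (\sum_(1 <= k < K.+1) (fun=> 1 : R) k * Pstar Pbar T k).
        by apply: eq_bigr => i _; rewrite mul1r.
      rewrite sumPstar //; by apply: eq_bigr => i _; rewrite mul1r.
    rewrite EQ1 EQ2 /psi /phi divfK //; apply: lt0r_neq0; exact: Npos.
  move: HN HD HN' HD' K1 K2.
  rewrite /fobj /log2.
  set N := 1 + \sum_(1 <= k < K.+1) P k.
  set D := 1 + \sum_(1 <= k < K.+1) h k * P k.
  set N' := 1 + \sum_(1 <= k < K.+1) Pstar Pbar T k.
  set D' := 1 + \sum_(1 <= k < K.+1) h k * Pstar Pbar T k.
  move=> HN HD HN' HD' K1 K2.
  have Hl2 : 0 < ln (2 : R) by apply: ln_gt0; lra.
  have Hineq : N * D' <= N' * D by nra.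
  have pos : forall x : R, 1 <= x -> x \is Num.pos.
    by move=> x Hx; rewrite posrE; lra.
  have Hln : ln (N * D') <= ln (N' * D).
    rewrite ler_ln // ?posrE; nra.
  rewrite !lnM ?pos // in Hln.
  have -> : 2^-1 * (ln N / ln 2) - 2^-1 * (ln D / ln 2) =
      (2^-1 / ln 2) * (ln N - ln D) by ring.
  have -> : 2^-1 * (ln N' / ln 2) - 2^-1 * (ln D' / ln 2) =
      (2^-1 / ln 2) * (ln N' - ln D') by ring.
  apply: ler_wpM2l; first by apply: divr_ge0; lra.
  lra.
split => //.
by move=> P HP; apply: le_max2 => //; apply: Hopt.
Qed.
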